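(* Let $q$ be a prime power and $n,r$ integers with $1\le r\le\lfloor n/2\rfloor$. Let $\mathcal{C}\subseteq\mathrm{GF}(q)^{r\times(n-r)}$ be any nonempty set of matrices and $I(\mathcal{C}) = \{R({\bf I}_r\mid{\bf C}) : {\bf C}\in\mathcal{C}\}\subseteq E_r(q,n)$. Then $I(\mathcal{C})$ has covering radius $r$, i.e. $\max_{U\in E_r(q,n)}\min_{{\bf C}\in\mathcal{C}} d_{\mathrm{I}}(U, R({\bf I}_r\mid{\bf C})) = r$.
   Context: $E_r(q,n)$ is the set of $r$-dimensional subspaces of $\mathrm{GF}(q)^n$; $R({\bf M})$ is the row space of a matrix ${\bf M}$; the injection distance is $d_{\mathrm{I}}(U,V)=\dim(U+V)-\min\{\dim U,\dim V\}$. *)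

(* Defs.v *)
From mathcomp Require Import all_boot all_order all_algebra all_field.
Set Implicit Arguments. Unset Strict Implicit. Unset Printing Implicit Defensive.
Import GRing.Theory.
Local Open Scope ring_scope.

(* Subspaces of GF(q)^n are represented by (row spaces of) matrices with n
   columns, via mxalgebra; R(M) is the row space of M. *)
Definition injdist (F : fieldType) (k l n : nat)
  (A : 'M[F]_(k, n)) (B : 'M[F]_(l, n)) : nat :=
  (\rank (A + B)%MS - minn (\rank A) (\rank B))%N.

(* Main.v *)
Require Import Defs.
From mathcomp Require Import all_boot all_order all_algebra all_field.
Import GRing.Theory.
Local Open Scope ring_scope.

Lemma rankB (F : fieldType) (r m : nat) (C : 'M[F]_(r, m)) :
  \rank (row_mx (1%:M : 'M[F]_r) C) = r.
Proof.
apply/eqP; rewrite eqn_leq rank_leq_row /=.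
have := mxrankM_maxl (row_mx (1%:M : 'M[F]_r) C) (col_mx 1%:M 0).
by rewrite mul_row_col mulmx1 mulmx0 addr0 mxrank1.
Qed.

Lemma upper (F : fieldType) (r m : nat) (U : 'M[F]_(r, r + m)) (C : 'M[F]_(r, m)) :
  \rank U = r -> (injdist U (row_mx (1%:M : 'M[F]_r) C) <= r)%N.
Proof.
move=> hU; rewrite /injdist rankB hU minnn.
case: (mxrank_adds_leqif U (row_mx (1%:M : 'M[F]_r) C)) => H _.
by rewrite leq_subLR; move: H; rewrite hU rankB.
Qed.

Lemma bigmin_le (T : eqType) (s : seq T) (P : pred T) (f : T -> nat) (i x : nat) (y : T) :
  y \in s -> P y -> (\big[minn/i]_(z <- s | P z) f z <= f y)%N.
Proof.
elim: s => [//|a s IH]; rewrite in_cons big_cons => /orP [/eqP <- -> | hy hP].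
  by rewrite geq_minl.
case: (P a); last exact: IH.
by rewrite geq_min IH ?orbT.
Qed.

Theorem lemma9 (F : finFieldType) (r m : nat) (Cs : {set 'M[F]_(r, m)}) :
  (1 <= r)%N -> (r <= m)%N -> Cs != set0 ->
  \max_(U : 'M[F]_(r, r + m) | \rank U == r)
     \big[minn/(r + m)%N]_(C in Cs) injdist U (row_mx (1%:M : 'M[F]_r) C)
  = r.
Proof.
move=> r1 rm /set0Pn [C0 hC0].
apply/eqP; rewrite eqn_leq; apply/andP; split.
  apply/bigmax_leqP => U /eqP hU.
  have hh := @upper _ _ _ U C0 hU. apply: (leq_trans _ hh); exact: (@bigmin_le _ (index_enum _) (fun C => C \in Cs) (fun C => injdist U (row_mx (1%:M : 'M[F]_r) C)) (r + m)%N 0%N C0 (mem_index_enum C0) hC0).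
set V : 'M[F]_(r, m) := pid_mx r.
have hV : \rank V = r by rewrite rank_pid_mx.
set U : 'M[F]_(r, r + m) := row_mx 0 V.
have hU : \rank U = r.
  apply/eqP; rewrite eqn_leq rank_leq_row /=.
  have := mxrankM_maxl U (col_mx 0 (1%:M : 'M[F]_m)).
  by rewrite mul_row_col mulmx0 mulmx1 add0r hV.
apply: leq_trans (leq_bigmax_cond _ (introT eqP hU)).
apply: (big_ind (fun x => r <= x)%N).
- exact: leq_addr.
- by move=> x y hx hy; rewrite leq_min hx hy.
move=> C _.
set B := row_mx (1%:M : 'M[F]_r) C.
have hcap : (U :&: B)%MS = 0.
  apply/eqP; rewrite -submx0.
  set W := (U :&: B)%MS.
  have /submxP [X hX] : (W <= B)%MS by apply: capmxSr.
  have /submxP [Y hY] : (W <= U)%MS by apply: capmxSl.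
  have h1 : lsubmx W = X by rewrite hX mul_mx_row row_mxKl mulmx1.
  have h2 : lsubmx W = 0 by rewrite hY mul_mx_row row_mxKl mulmx0.
  by rewrite hX -h1 h2 mul0mx.
by rewrite /injdist mxrank_disjoint_sum // hU rankB minnn addnK.
Qed.
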